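(* Let $a\in\mathbb{Q}\setminus\{-1,0,1\}$ and let $z\in\mathbb{C}$ with $|z|\le1$. For any positive real numbers $\xi<x$, \begin{multline*} \sum_{\substack{p\le x \\ \nu_p(a)=0}} z^{\Omega((p-1)/\mathrm{ord}_p(a))} = \sum_{\ell\mid Q_\xi} z^{\Omega(\ell)} (1-z^{-1})^{\omega(\ell)} \#\{ p\le x : \nu_p(a)=0,\ \ell \mid (p-1)/\mathrm{ord}_p(a) \} \\ + O\biggl( \sum_{\xi<q^k\le x} \#\{ p\le x : \nu_p(a)=0,\ q^k \mid (p-1)/\mathrm{ord}_p(a) \} \biggr), \end{multline*} with an absolute implied constant, where the error sum is over prime powers $q^k$ ($k\ge1$) in $(\xi,x]$.
   Context: $p,q$ denote primes. $\nu_p(a)$ is the $p$-adic valuation of $a$; $\mathrm{ord}_p(a)$ is the multiplicative order of $a$ mod $p$; $\omega,\Omega$ count prime factors without/with multiplicity. For $\xi>0$, $Q_\xi$ is the least common multiple of all positive integers $\le\xi$. The expression $z^{\Omega(\ell)}(1-z^{-1})^{\omega(\ell)}$ means the polynomial $z^{\Omega(\ell)-\omega(\ell)}(z-1)^{\omega(\ell)}$ (relevant at $z=0$), and $0^0=1$. *)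

(* Defs.v *)
From HB Require Import structures.
From mathcomp Require Import all_boot all_order all_algebra.
From mathcomp Require Import complex.
From mathcomp Require Import reals.
Set Implicit Arguments. Unset Strict Implicit. Unset Printing Implicit Defensive.
Import Order.TTheory GRing.Theory Num.Theory.
Local Open Scope ring_scope.

Definition nu (p : nat) (a : rat) : int :=
  (logn p `|numq a|%N)%:Z - (logn p `|denq a|%N)%:Z.

(* multiplicative order of a modulo p (for nu_p(a) = 0): the least k >= 1
   with numq a ^ k = denq a ^ k (mod p), i.e. a^k = 1 in F_p.
   (Such k exists in [1, p-1] when p is prime and nu_p(a) = 0.) *)
Definition ordp (p : nat) (a : rat) : nat :=
  head 0%N [seq k <- iota 1 p | ((p%:Z) %| numq a ^+ k - denq a ^+ k)%Z].

Definition omega (n : nat) : nat := size (primes n).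
Definition Omega (n : nat) : nat := \sum_(q <- primes n) logn q n.

Definition Qxi {R : realType} (xi : R) : nat :=
  \big[lcmn/1%N]_(1 <= i < (Num.truncn xi).+1) i.

Definition prime_power (n : nat) : bool :=
  [exists q : 'I_n.+1, [exists k : 'I_n.+1, [&& prime q, (0 < k)%N & n == q ^ k]%N]].

(* z^{Omega(l)} (1 - z^{-1})^{omega(l)}, read as the polynomial
   z^{Omega(l) - omega(l)} (z - 1)^{omega(l)} *)
Definition weight {R : realType} (z : R[i]) (l : nat) : R[i] :=
  z ^+ (Omega l - omega l) * (z - 1) ^+ omega l.

Definition cnt {R : realType} (a : rat) (x : R) (d : nat) : nat :=
  #|[set p : 'I_(Num.truncn x).+1 |
     [&& prime p, (p%:R <= x), nu p a == 0 & (d %| (p.-1 %/ ordp p a))%N]]|.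

(* Main.v *)
Require Import Defs.
From HB Require Import structures.
From mathcomp Require Import all_boot all_order all_algebra all_field.
From mathcomp Require Import complex.
From mathcomp Require Import reals zify.
Import Order.TTheory GRing.Theory Num.Theory.
Local Open Scope ring_scope.

Lemma Fp_int_eq0 (p : nat) (m : int) : prime p ->
  (m%:~R == 0 :> 'F_p) = (p %| `|m|)%N.
Proof.
move=> pp; rewrite (dvdn_pcharf (pchar_Fp pp)).
rewrite {1}[m]intEsign rmorphM /= rmorph_sign mulf_eq0 signr_eq0 /=.
by rewrite -[`|m|%N%:~R]/(`|m|%N%:R).
Qed.

Lemma fermat_int (p : nat) (u v : int) : prime p ->
  ~~ (p %| `|u|)%N -> ~~ (p %| `|v|)%N ->
  ((p%:Z) %| u ^+ p.-1 - v ^+ p.-1)%Z.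
Proof.
move=> pp hu hv.
have key : forall w : int, ~~ (p %| `|w|)%N -> (w%:~R : 'F_p) ^+ p.-1 = 1.
  move=> w hw; rewrite -Fp_int_eq0 // in hw.
  have := expf_card (w%:~R : 'F_p); rewrite card_Fp //.
  rewrite -(prednK (prime_gt0 pp)) exprS => h.
  apply: (mulfI hw); by rewrite mulr1 h.
rewrite dvdzE /= -Fp_int_eq0 //.
by rewrite rmorphB /= !rmorphXn /= !key // subrr.
Qed.

Lemma nu0_ndvd (p : nat) (a : rat) : prime p -> a != 0 -> nu p a = 0 ->
  ~~ (p %| `|numq a|)%N /\ ~~ (p %| `|denq a|)%N.
Proof.
move=> pp a0; rewrite /nu => /eqP; rewrite subr_eq0 => /eqP [] hl.
have n0 : (0 < `|numq a|)%N by rewrite absz_gt0 numq_eq0.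
have d0 : (0 < `|denq a|)%N by rewrite absz_gt0 denq_eq0.
have co := coprime_num_den a.
have both : (p %| `|numq a|)%N -> (p %| `|denq a|)%N -> False.
  move=> h1 h2; have : (p %| gcdn `|numq a| `|denq a|)%N by rewrite dvdn_gcd h1 h2.
  rewrite (eqP co).
  by rewrite dvdn1 => /eqP e; move: pp; rewrite e.
split; apply/negP => h.
  have : (0 < logn p `|numq a|)%N by rewrite logn_gt0 mem_primes pp n0 h.
  by rewrite hl logn_gt0 mem_primes => /and3P[_ _ /(both h)].
have : (0 < logn p `|denq a|)%N by rewrite logn_gt0 mem_primes pp d0 h.
by rewrite -hl logn_gt0 mem_primes => /and3P[_ _ /both /(_ h)].
Qed.

Lemma ordp_ok (p : nat) (a : rat) : prime p -> a != 0 -> nu p a = 0 ->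
  (0 < ordp p a <= p.-1)%N.
Proof.
move=> pp a0 nu0; have [hn hd] := nu0_ndvd _ _ pp a0 nu0.
have p1 := prime_gt1 pp.
have hf := fermat_int _ _ _ pp hn hd.
rewrite /ordp.
have -> : iota 1 p = iota 1 p.-1 ++ [:: p].
  have : forall q, (0 < q)%N -> iota 1 q = iota 1 q.-1 ++ [:: q].
    case=> [|q] // _; have := iotaD 1 q 1; rewrite addn1 add1n => -> //.
  by apply; apply: prime_gt0.
rewrite filter_cat.
set P := fun k => _.
set s1 := filter _ (iota 1 p.-1).
have m1 : p.-1 \in s1.
  rewrite mem_filter /P hf mem_iota /=; apply/andP; split; lia.
case E : s1 m1 => [|x s1'] //= _.
have : x \in s1 by rewrite E mem_head.
by rewrite mem_filter mem_iota add1n ltnS => /andP[_ /andP[-> ]].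
Qed.

Set Implicit Arguments. Unset Strict Implicit. Unset Printing Implicit Defensive.

Lemma primes_coprime (m n : nat) : coprime m n -> (0 < m)%N -> (0 < n)%N ->
  perm_eq (primes (m * n)) (primes m ++ primes n).
Proof.
move=> co_mn m_gt0 n_gt0.
apply: uniq_perm => [||p]; first exact: primes_uniq.
  by rewrite cat_uniq !primes_uniq -coprime_has_primes // co_mn.
by rewrite mem_cat primesM.
Qed.

Lemma Omega_coprime (m n : nat) : coprime m n -> (0 < m)%N -> (0 < n)%N ->
  Omega (m * n) = (Omega m + Omega n)%N.
Proof.
move=> co_mn m_gt0 n_gt0; rewrite /Omega.
rewrite (perm_big _ (primes_coprime co_mn m_gt0 n_gt0)) big_cat /= !big_seq.
congr (_ + _)%N; apply: eq_bigr => p; rewrite mem_primes => /and3P[_ _ dvp].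
  rewrite (mulnC m) logn_Gauss //; move: co_mn.
  by rewrite -(divnK dvp) coprimeMl => /andP[].
rewrite logn_Gauss //; move: co_mn.
by rewrite coprime_sym -(divnK dvp) coprimeMl => /andP[].
Qed.

Lemma omega_coprime (m n : nat) : coprime m n -> (0 < m)%N -> (0 < n)%N ->
  omega (m * n) = (omega m + omega n)%N.
Proof.
move=> co m0 n0; rewrite /omega (perm_size (primes_coprime co m0 n0)).
by rewrite size_cat.
Qed.

Lemma Omega_pfactor (p i : nat) : prime p -> Omega (p ^ i) = i.
Proof.
move=> pp; case: i => [|i]; first by rewrite expn0 /Omega big_nil.
by rewrite /Omega primesX // primes_prime // big_seq1 pfactorK.
Qed.

Lemma omega_pfactor (p i : nat) : prime p -> omega (p ^ i) = (0 < i)%N.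
Proof.
move=> pp; case: i => [|i]; first by rewrite expn0.
by rewrite /omega primesX // primes_prime.
Qed.

Lemma omega_le (n : nat) : (omega n <= Omega n)%N.
Proof.
rewrite /omega /Omega -sum1_size big_seq [X in (_ <= X)%N]big_seq.
by apply: leq_sum => q; rewrite -logn_gt0.
Qed.

Section W.
Variable R : realType.
Variable z : R[i].

Lemma weight_coprime (m n : nat) : coprime m n -> (0 < m)%N -> (0 < n)%N ->
  weight z (m * n) = weight z m * weight z n.
Proof.
move=> co m0 n0; rewrite /weight Omega_coprime // omega_coprime //.
have h1 := omega_le m; have h2 := omega_le n.
have -> : (Omega m + Omega n - (omega m + omega n) = (Omega m - omega m) + (Omega n - omega n))%N by lia.
by rewrite !exprD mulrACA.
Qed.

Lemma weight1 : weight z 1 = 1.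
Proof. by rewrite /weight /Omega /omega /= big_nil !expr0 mulr1. Qed.

Lemma weight_geom (p e : nat) : prime p ->
  \sum_(i <- iota 0 e.+1) weight z (p ^ i) = z ^+ e.
Proof.
move=> pp; elim: e => [|e IH].
  by rewrite /= big_seq1 expn0 weight1 expr0.
have -> : iota 0 e.+2 = iota 0 e.+1 ++ [:: e.+1].
  by have := iotaD 0 e.+1 1; rewrite addn1 add0n.
rewrite big_cat /= big_seq1 IH /weight Omega_pfactor // omega_pfactor //.
rewrite subn1 /= expr1 -[X in X + _]mulr1 -mulrDr addrC subrK.
by rewrite exprS mulrC.
Qed.

Lemma divisors_split (p e m : nat) : prime p -> coprime p m -> (0 < m)%N ->
  perm_eq (divisors (p ^ e * m)) [seq (p ^ i * d)%N | i <- iota 0 e.+1, d <- divisors m].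
Proof.
move=> pp co m0.
have pe0 : (0 < p ^ e)%N by rewrite expn_gt0 prime_gt0.
have M0 : (0 < p ^ e * m)%N by rewrite muln_gt0 pe0.
have cod : forall d, d \in divisors m -> coprime p d.
  move=> d; rewrite -dvdn_divisors // => dm.
  by apply: coprime_dvdr dm co.
apply: uniq_perm; first exact: divisors_uniq.
  apply: allpairs_uniq; [exact: iota_uniq | exact: divisors_uniq |].
  move=> [j1 c1] [j2 c2] h1 h2 /= E.
  have hc1 : c1 \in divisors m by case/allpairsP: h1 => [[? ?] /= [_ ? [_ ->]]].
  have hc2 : c2 \in divisors m by case/allpairsP: h2 => [[? ?] /= [_ ? [_ ->]]].
  have c10 : (0 < c1)%N by move: hc1; rewrite -dvdn_divisors // => /dvdn_gt0; apply.
  have c20 : (0 < c2)%N by move: hc2; rewrite -dvdn_divisors // => /dvdn_gt0; apply.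
  have := congr1 (logn p) E.
  rewrite !lognM ?c10 ?c20 ?expn_gt0 ?prime_gt0 // !pfactorK // !logn_coprime ?cod // !addn0 => ej.
  subst j2; congr (_, _); apply/eqP.
  have pj : (0 < p ^ j1)%N by rewrite expn_gt0 prime_gt0.
  by rewrite -(eqn_pmul2l pj) E.
move=> d; apply/idP/allpairsP.
  rewrite -dvdn_divisors // => dM.
  have d0 : (0 < d)%N := dvdn_gt0 M0 dM.
  have [d' cod' Ed] := pfactor_coprime pp d0.
  exists (logn p d, d'); split.
  - rewrite mem_iota /= add0n ltnS; have := dvdn_leq_log p M0 dM.
    by rewrite (lognM _ pe0 m0) pfactorK // (logn_coprime co) addn0.
  - rewrite /= -dvdn_divisors //; have : (d' %| p ^ e * m)%N.
      by apply: dvdn_trans dM; rewrite Ed dvdn_mulr.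
    have cd : coprime d' (p ^ e) by rewrite coprime_sym; apply: coprimeXl.
    by rewrite Gauss_dvdr.
  - by rewrite /= {1}Ed mulnC.
move=> [[i d'] [hi hd ->]] /=.
rewrite -dvdn_divisors //; apply: dvdn_mul.
  by rewrite dvdn_Pexp2l ?prime_gt1 //; move: hi; rewrite mem_iota.
by rewrite dvdn_divisors.
Qed.

Lemma sum_weight (m : nat) : (0 < m)%N ->
  \sum_(l <- divisors m) weight z l = z ^+ Omega m.
Proof.
elim/ltn_ind: m => m IH m0.
have [m1|m1] := leqP m 1.
  have -> : m = 1%N by lia.
  by rewrite /= big_seq1 weight1 /Omega /= big_nil.
set p := pdiv m; have pp : prime p by apply: pdiv_prime.
have [m' co Em] := pfactor_coprime pp m0.
set e := logn p m in Em.
have e0 : (0 < e)%N by rewrite logn_gt0 mem_primes pp m0 pdiv_dvd.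
have m'0 : (0 < m')%N by move: m0; rewrite Em muln_gt0 => /andP[].
have pe1 : (1 < p ^ e)%N by rewrite -(expn0 p) ltn_exp2l ?prime_gt1.
have lt : (m' < m)%N by rewrite Em -[X in (X < _)%N]muln1 ltn_pmul2l.
rewrite Em mulnC (perm_big _ (divisors_split e pp co m'0)) big_allpairs_dep /=.
under eq_bigr => i _.
  rewrite big_seq; under eq_bigr => d hd.
    have dm : (d %| m')%N by rewrite dvdn_divisors.
    have d0 : (0 < d)%N := dvdn_gt0 m'0 dm.
    have cpd : coprime (p ^ i) d by apply: coprimeXl; apply: coprime_dvdr co.
    have pi0 : (0 < p ^ i)%N by rewrite expn_gt0 prime_gt0.
    rewrite (weight_coprime cpd pi0 d0).
    over.
  rewrite -big_seq -mulr_sumr IH //.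
  over.
rewrite -mulr_suml weight_geom // -exprD.
have pe0 : (0 < p ^ e)%N by rewrite expn_gt0 prime_gt0.
rewrite (Omega_coprime (coprimeXl e co) pe0 m'0) Omega_pfactor // addnC.
Qed.
End W.

Lemma Qxi_dvd (R : realType) (xi : R) (i : nat) : (0 < i)%N ->
  (i <= Num.truncn xi)%N -> (i %| Qxi xi)%N.
Proof.
move=> i0 ile; rewrite /Qxi (bigD1_seq i) /=.
- exact: dvdn_lcml.
- by rewrite mem_index_iota i0 ltnS.
- by rewrite /index_iota iota_uniq.
Qed.

Lemma Qxi_gt0 (R : realType) (xi : R) : (0 < Qxi xi)%N.
Proof.
rewrite /Qxi big_seq; apply: (big_ind (fun n => 0 < n)%N) => //.
  by move=> u v u0 v0; rewrite lcmn_gt0 u0 v0.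
by move=> i; rewrite mem_index_iota => /andP[].
Qed.

Lemma exists_pp (R : realType) (xi x : R) (a : rat) (p : 'I_(Num.truncn x).+1) :
  0 < xi -> a != 0 -> prime p -> p%:R <= x -> nu p a = 0 ->
  ~~ (p.-1 %/ ordp p a %| Qxi xi)%N ->
  exists n : 'I_(Num.truncn x).+1,
    prime_power n && (xi < n%:R) && (n%:R <= x) && (n %| p.-1 %/ ordp p a)%N.
Proof.
move=> xi0 a0 pp px nu0 ndvd.
set np := (p.-1 %/ ordp p a)%N in ndvd *.
have /andP[o0 ole] := ordp_ok _ _ pp a0 nu0.
have np0 : (0 < np)%N by rewrite /np divn_gt0.
have nple : (np <= p.-1)%N by rewrite /np leq_div.
have [hq|hq] := boolP (has (fun q : nat => ~~ (np`_q %| Qxi xi)%N) (primes np)); last first.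
  exfalso; move/negP: ndvd; apply; apply/dvdn_partP => // q qin.
  by move/hasPn: hq => /(_ q qin); rewrite negbK.
case/hasP: hq => q qin nq.
have qp : prime q by move: qin; rewrite mem_primes => /andP[].
set k := logn q np.
have k0 : (0 < k)%N by rewrite /k logn_gt0.
set n0 := (q ^ k)%N.
have n0e : n0 = (np`_q)%N by rewrite p_part.
have n0pos : (0 < n0)%N by rewrite expn_gt0 prime_gt0.
have n0d : (n0 %| np)%N by rewrite n0e dvdn_part.
have n0lt : (n0 < p)%N.
  have := dvdn_leq np0 n0d; have := prime_gt0 pp; lia.
have n0N : (n0 < (Num.truncn x).+1)%N by apply: ltn_trans n0lt (ltn_ord p).
exists (Ordinal n0N) => /=.
rewrite n0d andbT; apply/andP; split; first apply/andP; first split.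
- apply/existsP.
  have hq' : (q < n0.+1)%N.
    rewrite ltnS; apply: dvdn_leq => //; rewrite /n0 -(prednK k0) expnS dvdn_mulr //.
  exists (Ordinal hq'); apply/existsP.
  have hk : (k < n0.+1)%N by exact: ltn_trans (ltn_expl k (prime_gt1 qp)) (ltnSn n0).
  by exists (Ordinal hk); rewrite /= qp k0 eqxx.
- rewrite ltNge; apply/negP => hle.
  move/negP: nq; apply; rewrite -n0e; apply: Qxi_dvd => //.
  by rewrite truncn_ge_nat // ltW.
- apply: le_trans px; rewrite ler_nat; exact: ltnW.
Qed.

Lemma perm_div_filter (Q n : nat) : (0 < Q)%N ->
  perm_eq [seq l <- divisors Q | (l %| n)%N] (divisors (gcdn Q n)).
Proof.
move=> Q0; have g0 : (0 < gcdn Q n)%N by rewrite gcdn_gt0 Q0.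
apply: uniq_perm; [by rewrite filter_uniq // divisors_uniq | exact: divisors_uniq|].
by move=> l; rewrite mem_filter -!dvdn_divisors // dvdn_gcd andbC.
Qed.

Lemma cnt_sum (R : realType) (a : rat) (x : R) (d : nat) :
  cnt a x d = (\sum_(p < (Num.truncn x).+1 | prime p && (p%:R <= x)%R && (nu p a == 0)%R)
                 (d %| p.-1 %/ ordp p a))%N.
Proof.
rewrite /cnt -sum1_card big_mkcond [RHS]big_mkcond /=.
apply: eq_bigr => p _; rewrite inE.
by case: (prime p); case: (p%:R <= x)%R; case: (nu p a == 0)%R; case: (d %| _)%N.
Qed.

Theorem proposition2p5 :
  exists C : rat, forall (R : realType) (a : rat) (z : R[i]) (xi x : R),
    a \notin [:: -1; 0; 1] -> `|z| <= 1 -> 0 < xi -> xi < x ->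
    `| \sum_(p < (Num.truncn x).+1 | prime p && (p%:R <= x) && (nu p a == 0))
          z ^+ Omega (p.-1 %/ ordp p a)
       - \sum_(l <- divisors (Qxi xi)) weight z l * (cnt a x l)%:R |
    <= (ratr C : R[i]) *
       (\sum_(n < (Num.truncn x).+1 | prime_power n && (xi < n%:R) && (n%:R <= x))
          cnt a x n)%:R.
Proof.
exists 2%:R => R a z xi x ha hz hxi hx.
have a0 : a != 0 by apply: contra ha => /eqP ->; rewrite !inE eqxx orbT.
have Q0 := Qxi_gt0 xi.
have main : \sum_(l <- divisors (Qxi xi)) weight z l * (cnt a x l)%:R =
   \sum_(p < (Num.truncn x).+1 | prime p && (p%:R <= x) && (nu p a == 0))
      z ^+ Omega (gcdn (Qxi xi) (p.-1 %/ ordp p a)).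
  under eq_bigr => l _ do rewrite cnt_sum natr_sum mulr_sumr.
  rewrite exchange_big /=; apply: eq_bigr => p /andP[/andP[pp px] /eqP nu0].
  have /andP[o0 ole] := ordp_ok _ _ pp a0 nu0.
  have np0 : (0 < p.-1 %/ ordp p a)%N by rewrite divn_gt0.
  rewrite -sum_weight ?gcdn_gt0 ?Q0 //.
  rewrite -(perm_big _ (perm_div_filter _ Q0)) big_filter [RHS]big_mkcond /=.
  by apply: eq_bigr => l _; case: (l %| _)%N; rewrite /= ?mulr1n ?mulr0n ?mulr1 ?mulr0.
rewrite main -sumrB; apply: le_trans (ler_norm_sum _ _ _) _.
have step : \sum_(p < (Num.truncn x).+1 | prime p && (p%:R <= x) && (nu p a == 0))
     `|z ^+ Omega (p.-1 %/ ordp p a) - z ^+ Omega (gcdn (Qxi xi) (p.-1 %/ ordp p a))|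
   <= \sum_(p < (Num.truncn x).+1 | prime p && (p%:R <= x) && (nu p a == 0))
        ((2 * ~~ (p.-1 %/ ordp p a %| Qxi xi))%N)%:R.
  apply: ler_sum => p _.
  case: (boolP (p.-1 %/ ordp p a %| Qxi xi)%N) => h.
    by rewrite (gcdn_idPr h) subrr normr0.
  apply: le_trans (ler_normB _ _) _; rewrite !normrX.
  have h1 : forall k, `|z| ^+ k <= 1 by move=> k; apply: exprn_ile1.
  rewrite /= muln1; apply: le_trans (lerD (h1 _) (h1 _)) _.
  by rewrite -(natrD _ 1 1).
apply: le_trans step _.
rewrite -natr_sum ratr_nat -natrM ler_nat -big_distrr /= leq_mul2l /=.
under [X in (_ <= X)%N]eq_bigr => n _ do rewrite cnt_sum.
rewrite exchange_big /=; apply: leq_sum => p /andP[/andP[pp px] /eqP nu0].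
case: (boolP (p.-1 %/ ordp p a %| Qxi xi)%N) => h //=.
have [n0 /andP[Pn0 dn0]] := exists_pp hxi a0 pp px nu0 h.
by rewrite (bigD1 n0) //= dn0.
Qed.
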